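(* Let $\mathbb{K}$ be an algebraically closed field of characteristic $p\geq 3$ and $L$ a nilpotent Lie superalgebra over $\mathbb{K}$ of total dimension $3$. Then $L$ is isomorphic to one of the following (basis listed as even $|$ odd, only nonzero brackets listed up to super antisymmetry): $\mathrm{sdim}=(0|3)$: $L^1_{0|3}=\langle\,|e_1,e_2,e_3\rangle$ abelian. $\mathrm{sdim}=(1|2)$, basis $e_1|e_2,e_3$: $L^1_{1|2}$ abelian; $L^2_{1|2}$: $[e_2,e_3]=e_1$; $L^3_{1|2}$: $[e_1,e_2]=e_3$; $L^4_{1|2}$: $[e_3,e_3]=e_1$. $\mathrm{sdim}=(2|1)$, basis $e_1,e_2|e_3$: $L^1_{2|1}$ abelian; $L^2_{2|1}$: $[e_3,e_3]=e_2$. $\mathrm{sdim}=(3|0)$, basis $e_1,e_2,e_3$: $L^1_{3|0}$ abelian; $L^2_{3|0}$: $[e_1,e_2]=e_3$.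
   Context: A Lie superalgebra $L=L_{\bar0}\oplus L_{\bar1}$ over a field of characteristic $p>2$ has a super antisymmetric bracket satisfying the super Jacobi identity and, additionally, $[x,[x,x]]=0$ for all $x\in L_{\bar1}$. $\mathrm{sdim}(L)=(\dim L_{\bar0}|\dim L_{\bar1})$. $L$ is nilpotent if the series $C^0(L)=L$, $C^{k+1}(L)=[C^k(L),L]$ reaches $0$. *)

(* Defs.v *)
From HB Require Import structures.
From mathcomp Require Import all_boot all_order all_algebra.
Set Implicit Arguments. Unset Strict Implicit. Unset Printing Implicit Defensive.
Import GRing.Theory.
Local Open Scope ring_scope.

(* Parities are booleans: false = even (0), true = odd (1). *)

Section LieSuper.
Variables (K : fieldType) (V : vectType K).

Definition homog (L0 L1 : {vspace V}) (b : bool) (x : V) : bool :=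
  x \in (if b then L1 else L0).

Definition is_lie_superalgebra (L0 L1 : {vspace V}) (br : V -> V -> V) : Prop :=
  ((L0 + L1)%VS = fullv /\ directv (L0 + L1)%VS) /\
      (forall (a : K) (x y z : V), br (a *: x + y) z = a *: br x z + br y z) /\
      (forall (a : K) (x y z : V), br x (a *: y + z) = a *: br x y + br x z) /\
      (forall (a b : bool) (x y : V), homog L0 L1 a x -> homog L0 L1 b y ->
          homog L0 L1 (a (+) b) (br x y)) /\
      (forall (a b : bool) (x y : V), homog L0 L1 a x -> homog L0 L1 b y ->
          br x y = - ((-1) ^+ (a && b) *: br y x)) /\
      (forall (a b c : bool) (x y z : V), homog L0 L1 a x -> homog L0 L1 b y ->
          homog L0 L1 c z ->
          br x (br y z) = br (br x y) z + (-1) ^+ (a && b) *: br y (br x z)) /\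
      (forall x : V, x \in L1 -> br x (br x x) = 0).

Fixpoint lcs (br : V -> V -> V) (k : nat) : {vspace V} :=
  match k with
  | 0 => fullv
  | k'.+1 => <<[seq br x y | x <- vbasis (lcs br k'), y <- vbasis (fullv : {vspace V})]>>%VS
  end.

Definition nilpotent (br : V -> V -> V) : Prop := exists k, lcs br k = 0%VS.

End LieSuper.

(* Model superalgebras on K^3 = 'rV[K]_3 with basis e_1,e_2,e_3
   (0-indexed here as e 0, e 1, e 2); the first m basis vectors are even,
   the remaining ones are odd. *)
Section Models.
Variable K : fieldType.

Definition e (k : nat) : 'rV[K]_3 := delta_mx 0 (inord k).

Definition model_even (m : nat) : {vspace 'rV[K]_3} :=
  <<[seq delta_mx ord0 i | i <- [seq i <- enum 'I_3 | (nat_of_ord i < m)%N]]>>%VS.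
Definition model_odd (m : nat) : {vspace 'rV[K]_3} :=
  <<[seq delta_mx ord0 i | i <- [seq i <- enum 'I_3 | (m <= nat_of_ord i)%N]]>>%VS.

(* structure constants given as a list of ((i, j), [e_i, e_j]) entries;
   unlisted brackets of basis vectors are zero *)
Definition sconst (l : seq (nat * nat * 'rV[K]_3)) (i j : 'I_3) : 'rV[K]_3 :=
  \sum_(t <- l | (t.1.1 == i) && (t.1.2 == j)) t.2.

Definition model_br (l : seq (nat * nat * 'rV[K]_3)) (u v : 'rV[K]_3) : 'rV[K]_3 :=
  \sum_(i < 3) \sum_(j < 3) (u 0 i * v 0 j) *: sconst l i j.

End Models.

Definition iso_model (K : fieldType) (V : vectType K) (L0 L1 : {vspace V})
  (br : V -> V -> V) (m : nat) (l : seq (nat * nat * 'rV[K]_3)) : Prop :=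
  exists f : V -> 'rV[K]_3,
    [/\ (forall (a : K) (x y : V), f (a *: x + y) = a *: f x + f y),
        bijective f,
        (forall x, (x \in L0) = (f x \in model_even K m)),
        (forall x, (x \in L1) = (f x \in model_odd K m))
      & (forall x y, f (br x y) = model_br l (f x) (f y))].

(* Main.v *)
Require Import Defs.
From HB Require Import structures.
From mathcomp Require Import all_boot all_order all_algebra.
From mathcomp Require Import ring.
From Stdlib Require Import Classical.
Import GRing.Theory.
Local Open Scope ring_scope.
Set Implicit Arguments. Unset Strict Implicit.

Section Aux.
Variables (K : fieldType) (V : vectType K).
Variables (v0 v1 v2 : V).

Definition lc (a b c : K) : V := a *: v0 + b *: v1 + c *: v2.

Lemma lcZ k a b c : k *: lc a b c = lc (k * a) (k * b) (k * c).
Proof. by rewrite /lc !scalerDr !scalerA. Qed.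

Lemma lcD a b c a' b' c' : lc a b c + lc a' b' c' = lc (a + a') (b + b') (c + c').
Proof.
by rewrite /lc !scalerDl addrACA [X in X + _]addrACA.
Qed.

Lemma lcN a b c : - lc a b c = lc (-a) (-b) (-c).
Proof. by rewrite /lc !opprD -!scaleNr. Qed.

Lemma lc0 : lc 0 0 0 = 0.
Proof. by rewrite /lc !scale0r !addr0. Qed.

Lemma lc_eq a b c a' b' c' : a = a' -> b = b' -> c = c' -> lc a b c = lc a' b' c'.
Proof. by move=> -> -> ->. Qed.

Hypothesis hfree : free [:: v0; v1; v2].

Lemma lc_zero a b c : lc a b c = 0 -> [/\ a = 0, b = 0 & c = 0].
Proof.
move=> H.
have /freeP HX := hfree; rewrite /= in HX.
pose k (i : 'I_3) := nth 0 [:: a; b; c] i.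
have Hk : \sum_(i < 3) k i *: [tuple v0; v1; v2]`_i = 0.
  by rewrite !big_ord_recl big_ord0 /= addr0 addrA.
have := HX k Hk.
by move=> Hi; split; [apply: (Hi ord0) | apply: (Hi (lift ord0 ord0)) |
   apply: (Hi (lift ord0 (lift ord0 ord0)))].
Qed.

Lemma lc_inj a b c a' b' c' : lc a b c = lc a' b' c' -> [/\ a = a', b = b' & c = c'].
Proof.
move=> H.
have : lc (a - a') (b - b') (c - c') = 0.
  by rewrite -(lcD a b c (-a') (-b') (-c')) -lcN H subrr.
case/lc_zero=> /eqP; rewrite subr_eq0 => /eqP -> /eqP; rewrite subr_eq0 => /eqP ->.
by move/eqP; rewrite subr_eq0 => /eqP ->.
Qed.


Definition det3 (A0 A1 A2 B0 B1 B2 C0 C1 C2 : K) :=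
  A0 * (B1 * C2 - B2 * C1) - A1 * (B0 * C2 - B2 * C0) + A2 * (B0 * C1 - B1 * C0).

Lemma free_det A0 A1 A2 B0 B1 B2 C0 C1 C2 :
  det3 A0 A1 A2 B0 B1 B2 C0 C1 C2 != 0 ->
  free [:: lc A0 A1 A2; lc B0 B1 B2; lc C0 C1 C2].
Proof.
move=> hd; rewrite -[X in free X]/(tval [tuple lc A0 A1 A2; lc B0 B1 B2; lc C0 C1 C2]); apply/freeP => k.
rewrite !big_ord_recl big_ord0 /= addr0 !lcZ !lcD => /lc_zero[e0 e1 e2].
set k0 := k ord0 in e0 e1 e2 *.
set k1 := k (lift ord0 ord0) in e0 e1 e2 *.
set k2 := k (lift ord0 (lift ord0 ord0)) in e0 e1 e2 *.
have h0 : k0 * det3 A0 A1 A2 B0 B1 B2 C0 C1 C2 =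
   (B1 * C2 - B2 * C1) * (k0 * A0 + (k1 * B0 + k2 * C0))
   - (B0 * C2 - B2 * C0) * (k0 * A1 + (k1 * B1 + k2 * C1))
   + (B0 * C1 - B1 * C0) * (k0 * A2 + (k1 * B2 + k2 * C2)) by rewrite /det3; ring.
have h1 : k1 * det3 A0 A1 A2 B0 B1 B2 C0 C1 C2 =
   (A2 * C1 - A1 * C2) * (k0 * A0 + (k1 * B0 + k2 * C0))
   - (A2 * C0 - A0 * C2) * (k0 * A1 + (k1 * B1 + k2 * C1))
   + (A1 * C0 - A0 * C1) * (k0 * A2 + (k1 * B2 + k2 * C2)) by rewrite /det3; ring.
have h2 : k2 * det3 A0 A1 A2 B0 B1 B2 C0 C1 C2 =
   (A1 * B2 - A2 * B1) * (k0 * A0 + (k1 * B0 + k2 * C0))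
   - (A0 * B2 - A2 * B0) * (k0 * A1 + (k1 * B1 + k2 * C1))
   + (A0 * B1 - A1 * B0) * (k0 * A2 + (k1 * B2 + k2 * C2)) by rewrite /det3; ring.
rewrite e0 e1 e2 !mulr0 subrr add0r in h0 h1 h2.
move: h0 h1 h2 => /eqP; rewrite mulf_eq0 (negPf hd) orbF => /eqP h0.
move=> /eqP; rewrite mulf_eq0 (negPf hd) orbF => /eqP h1.
move=> /eqP; rewrite mulf_eq0 (negPf hd) orbF => /eqP h2.
move=> i; case: i => [[|[|[|//]]] Hi].
- by rewrite -h0 /k0; congr k; apply: val_inj.
- by rewrite -h1 /k1; congr k; apply: val_inj.
- by rewrite -h2 /k2; congr k; apply: val_inj.
Qed.

End Aux.

Section Br.
Variables (K : fieldType) (V : vectType K) (br : V -> V -> V).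
Hypothesis hl : forall (a : K) (x y z : V), br (a *: x + y) z = a *: br x z + br y z.
Hypothesis hr : forall (a : K) (x y z : V), br x (a *: y + z) = a *: br x y + br x z.

Lemma br0l z : br 0 z = 0.
Proof.
have := hl 1 0 0 z; rewrite scaler0 addr0 scale1r.
by rewrite -{1}(addr0 (br 0 z)) => /addrI.
Qed.
Lemma br0r z : br z 0 = 0.
Proof.
have := hr 1 z 0 0; rewrite scaler0 addr0 scale1r.
by rewrite -{1}(addr0 (br z 0)) => /addrI.
Qed.
Lemma brDl x y z : br (x + y) z = br x z + br y z.
Proof. by have := hl 1 x y z; rewrite !scale1r. Qed.
Lemma brDr x y z : br z (x + y) = br z x + br z y.
Proof. by have := hr 1 z x y; rewrite !scale1r. Qed.
Lemma brZl a x z : br (a *: x) z = a *: br x z.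
Proof. by have := hl a x 0 z; rewrite !addr0 br0l addr0. Qed.
Lemma brZr a x z : br z (a *: x) = a *: br z x.
Proof. by have := hr a z x 0; rewrite !addr0 br0r addr0. Qed.
Lemma br_suml I (r : seq I) (P : pred I) (F : I -> V) z :
  br (\sum_(i <- r | P i) F i) z = \sum_(i <- r | P i) br (F i) z.
Proof. exact: (big_morph (fun x => br x z) (fun x y => brDl x y z) (br0l z)). Qed.
Lemma br_sumr I (r : seq I) (P : pred I) (F : I -> V) z :
  br z (\sum_(i <- r | P i) F i) = \sum_(i <- r | P i) br z (F i).
Proof. exact: (big_morph (fun x => br z x) (fun x y => brDr x y z) (br0r z)). Qed.

Variables (v0 v1 v2 : V).
Definition bil (s : nat -> nat -> nat -> K) (a0 a1 a2 b0 b1 b2 : K) (k : nat) : K :=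
  a0 * b0 * s 0 0 k + a0 * b1 * s 0 1 k + a0 * b2 * s 0 2 k +
  a1 * b0 * s 1 0 k + a1 * b1 * s 1 1 k + a1 * b2 * s 1 2 k +
  a2 * b0 * s 2 0 k + a2 * b1 * s 2 1 k + a2 * b2 * s 2 2 k.

Definition tabok (s : nat -> nat -> nat -> K) :=
  forall i j, (i < 3)%N -> (j < 3)%N ->
  br (nth 0 [:: v0; v1; v2] i) (nth 0 [:: v0; v1; v2] j) =
  lc v0 v1 v2 (s i j 0) (s i j 1) (s i j 2).

Lemma br_lc s (Hs : tabok s) a0 a1 a2 b0 b1 b2 :
  br (lc v0 v1 v2 a0 a1 a2) (lc v0 v1 v2 b0 b1 b2) =
  lc v0 v1 v2 (bil s a0 a1 a2 b0 b1 b2 0) (bil s a0 a1 a2 b0 b1 b2 1)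
     (bil s a0 a1 a2 b0 b1 b2 2).
Proof.
rewrite {1 2}/lc !brDl !brDr !brZl !brZr !scalerA.
rewrite (Hs 0%N 0%N) // (Hs 0%N 1%N) // (Hs 0%N 2%N) // (Hs 1%N 0%N) // (Hs 1%N 1%N) //
  (Hs 1%N 2%N) // (Hs 2%N 0%N) // (Hs 2%N 1%N) // (Hs 2%N 2%N) //.
by rewrite !lcZ !lcD /bil; apply: lc_eq; ring.
Qed.

End Br.

Section LCS.
Variables (K : fieldType) (V : vectType K) (br : V -> V -> V).
Hypothesis hl : forall (a : K) (x y z : V), br (a *: x + y) z = a *: br x z + br y z.
Hypothesis hr : forall (a : K) (x y z : V), br x (a *: y + z) = a *: br x y + br x z.

Lemma br_in_lcs k y x : y \in lcs br k -> br y x \in lcs br k.+1.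
Proof.
move=> Hy /=.
rewrite (coord_vbasis Hy) (coord_vbasis (memvf x)).
rewrite (br_suml hl); apply: memv_suml => i _.
rewrite (br_sumr hr); apply: memv_suml => j _.
rewrite (brZl hl) (brZr hr); apply: memvZ; apply: memvZ.
apply: memv_span; apply: allpairs_f; apply: mem_nth; by rewrite size_tuple.
Qed.

Lemma lcs_decr k : (lcs br k.+1 <= lcs br k)%VS.
Proof.
elim: k => [|k IH]; first exact: subvf.
apply/span_subvP => v /allpairsP [[x y] [Hx Hy ->]] /=.
apply: br_in_lcs; apply: (subvP IH); exact: vbasis_mem.
Qed.

Lemma lcs_mono m n : (m <= n)%N -> (lcs br n <= lcs br m)%VS.
Proof.
move=> /subnK <-; elim: (n - m)%N => [|d IH]; first exact: subvv.
by rewrite addSn; apply: subv_trans IH; apply: lcs_decr.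
Qed.

Hypothesis hnil : nilpotent br.

Lemma nilA y x : br y x = y -> y = 0.
Proof.
move=> H; have Hk : forall k, y \in lcs br k.
  by elim=> [|k IH]; [exact: memvf | rewrite -H; apply: br_in_lcs].
case: hnil => k Hk0; move: (Hk k); rewrite Hk0 memv0 => /eqP //.
Qed.

Lemma lcs1_sub (U : {vspace V}) : (forall x y, br x y \in U) -> (lcs br 1 <= U)%VS.
Proof. by move=> H; apply/span_subvP => v /allpairsP [[x y] [_ _ ->]]. Qed.

Lemma central_elt : (\dim (fullv : {vspace V}) > 0)%N -> (exists x y, br x y != 0) ->
  exists c, [/\ c != 0, c \in lcs br 1 & forall v, br c v = 0].
Proof.
move=> hd [x [y Hxy]].
have exP : exists k, lcs br k == 0%VS by case: hnil => k Hk; exists k; rewrite Hk.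
case: (ex_minnP exP) => k /eqP Hk Hmin.
have k0 : k != 0%N.
  apply/eqP => k0; subst k; move: hd.
  by rewrite -[fullv]/(lcs br 0) Hk dimv0.
have k1 : k != 1%N.
  apply/eqP => k1; subst k.
  have : br x y \in lcs br 1 by apply: br_in_lcs; exact: memvf.
  by rewrite Hk memv0 (negPf Hxy).
case: k k0 k1 Hk Hmin => [//|k] _ k1 Hk Hmin.
have kpos : (1 <= k)%N by case: k k1 {Hk Hmin}.
have nz : lcs br k != 0%VS.
  apply/negP => /eqP/eqP H; move: (Hmin k H); by rewrite ltnn.
exists (vpick (lcs br k)); split.
- by rewrite vpick0.
- exact: (subvP (lcs_mono kpos)) (memv_pick _).
- move=> v; apply/eqP; rewrite -memv0 -Hk; apply: br_in_lcs; exact: memv_pick.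
Qed.

End LCS.

Section Iso.
Variables (K : fieldType) (V : vectType K) (L0 L1 : {vspace V}) (br : V -> V -> V).
Hypothesis hl : forall (a : K) (x y z : V), br (a *: x + y) z = a *: br x z + br y z.
Hypothesis hr : forall (a : K) (x y z : V), br x (a *: y + z) = a *: br x y + br x z.
Hypothesis hsum : (L0 + L1)%VS = fullv.
Hypothesis hdir : directv (L0 + L1).
Hypothesis hd : \dim (fullv : {vspace V}) = 3%N.
Variables (w0 w1 w2 : V).
Hypothesis hfree : free [:: w0; w1; w2].
Let X := [tuple w0; w1; w2].

Let hX : basis_of fullv X.
Proof. by rewrite basisEfree hfree subvf hd. Qed.

Let f (x : V) : 'rV[K]_3 := \row_(i < 3) coord X i x.
Let g (u : 'rV[K]_3) : V := \sum_(i < 3) u 0 i *: X`_i.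

Let fK : cancel f g.
Proof.
move=> x; rewrite /g /f [RHS](coord_basis hX (memvf x)).
by apply: eq_bigr => i _; rewrite mxE.
Qed.

Let gK : cancel g f.
Proof. by move=> u; apply/rowP => i; rewrite /f /g mxE coord_sum_free. Qed.

Let fP a x y : f (a *: x + y) = a *: f x + f y.
Proof. by apply/rowP => i; rewrite /f !mxE linearP. Qed.
Let f0 : f 0 = 0.
Proof. by apply/rowP => i; rewrite /f !mxE linear0. Qed.
Let fD x y : f (x + y) = f x + f y.
Proof. by have := fP 1 x y; rewrite !scale1r. Qed.
Let fZ a x : f (a *: x) = a *: f x.
Proof. by have := fP a x 0; rewrite !addr0 f0 addr0. Qed.
Let f_sum I (r : seq I) (P : pred I) (F : I -> V) :
  f (\sum_(i <- r | P i) F i) = \sum_(i <- r | P i) f (F i).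
Proof. exact: (big_morph f fD f0). Qed.

Let gP a u v : g (a *: u + v) = a *: g u + g v.
Proof.
rewrite /g scaler_sumr -big_split; apply: eq_bigr => i _.
by rewrite !mxE scalerDl scalerA.
Qed.
Let g0 : g 0 = 0.
Proof. by rewrite /g big1 // => i _; rewrite mxE scale0r. Qed.
Let gD u v : g (u + v) = g u + g v.
Proof. by have := gP 1 u v; rewrite !scale1r. Qed.
Let gZ a u : g (a *: u) = a *: g u.
Proof. by have := gP a u 0; rewrite !addr0 g0 addr0. Qed.
Let g_sum I (r : seq I) (P : pred I) (F : I -> 'rV[K]_3) :
  g (\sum_(i <- r | P i) F i) = \sum_(i <- r | P i) g (F i).
Proof. exact: (big_morph g gD g0). Qed.

Let g_delta (i : 'I_3) : g (delta_mx 0 i) = X`_i.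
Proof.
rewrite /g (bigD1 i) //= mxE !eqxx scale1r big1 ?addr0 // => j /negPf ji.
rewrite mxE; case: (@eqP _ j i) => [jE|_]; [by rewrite jE eqxx in ji | by rewrite andbF scale0r].
Qed.

Let mem_equiv (P : pred 'I_3) (U : {vspace V}) :
  (forall i, P i -> X`_i \in U) ->
  (forall x, x \in U -> forall i, ~~ P i -> coord X i x = 0) ->
  forall x, (x \in U) =
    (f x \in <<[seq delta_mx ord0 i | i <- [seq i <- enum 'I_3 | P i]]>>%VS).
Proof.
move=> HP Hc x; apply/idP/idP => Hx.
- rewrite [f x]row_sum_delta; apply: memv_suml => i _.
  case Pi: (P i).
  + apply: memvZ; apply: memv_span; apply: map_f.
    by rewrite mem_filter Pi mem_enum.
  + by rewrite /f mxE (Hc x Hx i) ?Pi // scale0r mem0v.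
- rewrite -(fK x); move: Hx; set Y := [seq delta_mx ord0 i | i <- _] => Hx.
  rewrite (coord_span (X := in_tuple Y) Hx) g_sum.
  apply: memv_suml => k _; rewrite gZ; apply: memvZ.
  have : (in_tuple Y)`_k \in Y by apply: mem_nth; exact: ltn_ord.
  case/mapP => i; rewrite mem_filter => /andP[Pi _] ->.
  by rewrite g_delta; apply: HP.
Qed.

Let split_coord (P : pred 'I_3) (U W : {vspace V}) :
  (forall i, P i -> X`_i \in U) -> (forall i, ~~ P i -> X`_i \in W) ->
  (U :&: W = 0)%VS ->
  forall x, x \in U -> forall i, ~~ P i -> coord X i x = 0.
Proof.
move=> HU HW Hcap x Hx i Pi.
set x0 := \sum_(j < 3) (if P j then coord X j x else 0) *: X`_j.
set x1 := \sum_(j < 3) (if P j then 0 else coord X j x) *: X`_j.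
have Ex : x = x0 + x1.
  rewrite {1}(coord_basis hX (memvf x)) /x0 /x1 -big_split; apply: eq_bigr => j _.
  by case: (P j); rewrite scale0r /= ?addr0 ?add0r.
have H0 : x0 \in U.
  apply: memv_suml => j _; case Pj: (P j); last by rewrite scale0r mem0v.
  by apply: memvZ; apply: HU.
have H1 : x1 \in W.
  apply: memv_suml => j _; case Pj: (P j); first by rewrite scale0r mem0v.
  by apply: memvZ; apply: HW; rewrite Pj.
have : x1 \in (U :&: W)%VS.
  rewrite memv_cap H1 andbT.
  have -> : x1 = x - x0 by rewrite Ex addrC addKr.
  by rewrite memvB.
rewrite Hcap memv0 => /eqP x10.
have := coord_sum_free (fun j : 'I_3 => if P j then 0 else coord X j x) i hfree.
by rewrite -/x1 x10 linear0 (negPf Pi) => <-.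
Qed.

Lemma iso_of_basis_aux m l :
  (forall i : 'I_3, (i < m)%N -> X`_i \in L0) ->
  (forall i : 'I_3, (m <= i)%N -> X`_i \in L1) ->
  (forall i j : 'I_3, br X`_i X`_j = \sum_(k < 3) (sconst l i j) 0 k *: X`_k) ->
  iso_model L0 L1 br m l.
Proof.
move=> H0 H1 Hb.
have hcap : (L0 :&: L1 = 0)%VS by apply/directv_addP.
have hcap' : (L1 :&: L0 = 0)%VS by rewrite capvC.
exists f; split.
- exact: fP.
- by exists g.
- apply: mem_equiv => [i Hi|]; first exact: H0.
  apply: (split_coord (W := L1)) hcap => // i; rewrite -leqNgt; exact: H1.
- apply: mem_equiv => [i Hi|]; first exact: H1.
  apply: (split_coord (W := L0)) hcap' => // i; rewrite -ltnNge; exact: H0.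
- move=> x y.
  rewrite {1}(coord_basis hX (memvf x)) {1}(coord_basis hX (memvf y)).
  rewrite (br_suml hl) f_sum /model_br; apply: eq_bigr => i _.
  rewrite (brZl hl) fZ (br_sumr hr) f_sum scaler_sumr; apply: eq_bigr => j _.
  rewrite (brZr hr) fZ Hb -/(g (sconst l i j)) gK scalerA.
  by rewrite /f !mxE.
Qed.

End Iso.

Lemma sum_e (K : fieldType) (V : vectType K) (a b c : V) (n : nat) : (n < 3)%N ->
  \sum_(k < 3) (e K n) 0 k *: [:: a; b; c]`_k = [:: a; b; c]`_n.
Proof.
move=> hn; rewrite !big_ord_recl big_ord0 /e !mxE /= addr0.
rewrite -!(inj_eq val_inj) /= inordK //.
by case: n hn => [|[|[|]]] //= _; rewrite !scale0r !scale1r ?add0r ?addr0.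
Qed.

Lemma sum_eN (K : fieldType) (V : vectType K) (a b c : V) (n : nat) : (n < 3)%N ->
  \sum_(k < 3) (- e K n) 0 k *: [:: a; b; c]`_k = - [:: a; b; c]`_n.
Proof.
move=> hn; rewrite -(sum_e a b c hn) -sumrN; apply: eq_bigr => k _.
by rewrite mxE scaleNr.
Qed.

Lemma sum_0 (K : fieldType) (V : vectType K) (a b c : V) :
  \sum_(k < 3) (0 : 'rV[K]_3) 0 k *: [:: a; b; c]`_k = 0.
Proof. by rewrite big1 // => k _; rewrite mxE scale0r. Qed.

Section Wrap.
Variables (K : fieldType) (V : vectType K) (L0 L1 : {vspace V}) (br : V -> V -> V).
Hypothesis hl : forall (a : K) (x y z : V), br (a *: x + y) z = a *: br x z + br y z.
Hypothesis hr : forall (a : K) (x y z : V), br x (a *: y + z) = a *: br x y + br x z.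
Hypothesis hsum : (L0 + L1)%VS = fullv.
Hypothesis hdir : directv (L0 + L1).
Hypothesis hd : \dim (fullv : {vspace V}) = 3%N.
Variables (m : nat) (w0 w1 w2 : V).
Hypothesis hfree : free [:: w0; w1; w2].
Hypothesis G0 : w0 \in (if (0 < m)%N then L0 else L1).
Hypothesis G1 : w1 \in (if (1 < m)%N then L0 else L1).
Hypothesis G2 : w2 \in (if (2 < m)%N then L0 else L1).

Lemma iso_of_basis l :
  (forall i j : 'I_3, br [:: w0; w1; w2]`_i [:: w0; w1; w2]`_j =
     \sum_(k < 3) (sconst l i j) 0 k *: [:: w0; w1; w2]`_k) ->
  iso_model L0 L1 br m l.
Proof.
move=> Hb; apply: (iso_of_basis_aux hl hr hdir hd hfree) => //.
- by move=> [[|[|[|//]]] Hi] /= Hm; [move: G0 | move: G1 | move: G2]; rewrite Hm.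
- move=> [[|[|[|//]]] Hi] /= Hm; [move: G0 | move: G1 | move: G2];
  by rewrite ltnNge Hm.
Qed.

Ltac sc := rewrite /sconst !big_cons big_nil /= ?addr0 ?sum_0 ?sum_e ?sum_eN.

Lemma iso_ab :
  br w0 w0 = 0 -> br w0 w1 = 0 -> br w0 w2 = 0 ->
  br w1 w0 = 0 -> br w1 w1 = 0 -> br w1 w2 = 0 ->
  br w2 w0 = 0 -> br w2 w1 = 0 -> br w2 w2 = 0 ->
  iso_model L0 L1 br m [::].
Proof.
move=> H00 H01 H02 H10 H11 H12 H20 H21 H22; apply: iso_of_basis.
move=> [[|[|[|//]]] Hi] [[|[|[|//]]] Hj]; rewrite /sconst big_nil sum_0 /=; done.
Qed.

Lemma iso_H :
  br w0 w0 = 0 -> br w0 w1 = w2 -> br w0 w2 = 0 ->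
  br w1 w0 = - w2 -> br w1 w1 = 0 -> br w1 w2 = 0 ->
  br w2 w0 = 0 -> br w2 w1 = 0 -> br w2 w2 = 0 ->
  iso_model L0 L1 br m [:: (0, 1, e K 2); (1, 0, - e K 2)]%N.
Proof.
move=> H00 H01 H02 H10 H11 H12 H20 H21 H22; apply: iso_of_basis.
by move=> [[|[|[|//]]] Hi] [[|[|[|//]]] Hj]; sc.
Qed.

Lemma iso_L2 :
  br w0 w0 = 0 -> br w0 w1 = 0 -> br w0 w2 = 0 ->
  br w1 w0 = 0 -> br w1 w1 = 0 -> br w1 w2 = w0 ->
  br w2 w0 = 0 -> br w2 w1 = w0 -> br w2 w2 = 0 ->
  iso_model L0 L1 br m [:: (1, 2, e K 0); (2, 1, e K 0)]%N.
Proof.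
move=> H00 H01 H02 H10 H11 H12 H20 H21 H22; apply: iso_of_basis.
by move=> [[|[|[|//]]] Hi] [[|[|[|//]]] Hj]; sc.
Qed.

Lemma iso_L4 :
  br w0 w0 = 0 -> br w0 w1 = 0 -> br w0 w2 = 0 ->
  br w1 w0 = 0 -> br w1 w1 = 0 -> br w1 w2 = 0 ->
  br w2 w0 = 0 -> br w2 w1 = 0 -> br w2 w2 = w0 ->
  iso_model L0 L1 br m [:: (2, 2, e K 0)]%N.
Proof.
move=> H00 H01 H02 H10 H11 H12 H20 H21 H22; apply: iso_of_basis.
by move=> [[|[|[|//]]] Hi] [[|[|[|//]]] Hj]; sc.
Qed.

Lemma iso_L21 :
  br w0 w0 = 0 -> br w0 w1 = 0 -> br w0 w2 = 0 ->
  br w1 w0 = 0 -> br w1 w1 = 0 -> br w1 w2 = 0 ->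
  br w2 w0 = 0 -> br w2 w1 = 0 -> br w2 w2 = w1 ->
  iso_model L0 L1 br m [:: (2, 2, e K 1)]%N.
Proof.
move=> H00 H01 H02 H10 H11 H12 H20 H21 H22; apply: iso_of_basis.
by move=> [[|[|[|//]]] Hi] [[|[|[|//]]] Hj]; sc.
Qed.

End Wrap.

Lemma graded_setup (K : fieldType) (V : vectType K) (L0 L1 : {vspace V}) :
  (L0 + L1)%VS = fullv -> directv (L0 + L1) -> \dim (fullv : {vspace V}) = 3%N ->
  exists v0 v1 v2 : V, free [:: v0; v1; v2] /\
  [\/ L0 = 0%VS /\ L1 = <<[:: v0; v1; v2]>>%VS,
      L0 = <<[:: v0]>>%VS /\ L1 = <<[:: v1; v2]>>%VS,
      L0 = <<[:: v0; v1]>>%VS /\ L1 = <<[:: v2]>>%VS |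
      L0 = <<[:: v0; v1; v2]>>%VS /\ L1 = 0%VS].
Proof.
move=> hsum hdir hd.
have bX := cat_basis hdir (vbasisP L0) (vbasisP L1); rewrite hsum in bX.
have E0 := span_basis (vbasisP L0); have E1 := span_basis (vbasisP L1).
have sz : (size (vbasis L0) + size (vbasis L1) = 3)%N.
  rewrite !size_tuple -dimv_disjoint_sum ?hsum //; exact/directv_addP.
have fr := basis_free bX.
move: (tval (vbasis L0)) (tval (vbasis L1)) E0 E1 sz fr => s0 s1 E0 E1 sz fr.
case: s0 E0 sz fr => [|a [|b [|c [|x s0]]]] E0;
  case: s1 E1 => [|a' [|b' [|c' [|x' s1]]]] E1 //= sz fr.
- by exists a', b', c'; split => //; apply: Or41; rewrite -E0 -E1 span_nil.
- by exists a, a', b'; split => //; apply: Or42; rewrite -E0 -E1.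
- by exists a, b, a'; split => //; apply: Or43; rewrite -E0 -E1.
- by exists a, b, c; split; rewrite ?cats0 //; apply: Or44; rewrite -E0 -E1 span_nil.
Qed.

Lemma lc_span (K : fieldType) (V : vectType K) (a b c : V) :
  free [:: a; b; c] -> \dim (fullv : {vspace V}) = 3%N ->
  forall x, exists k0 k1 k2, x = lc a b c k0 k1 k2.
Proof.
move=> hf hd x.
have hX : basis_of fullv [tuple a; b; c] by rewrite basisEfree hf subvf hd.
rewrite (coord_basis hX (memvf x)) !big_ord_recl big_ord0 /= addr0.
by eexists; eexists; eexists; rewrite /lc addrA.
Qed.

Lemma mem_span1 (K : fieldType) (V : vectType K) (a x : V) :
  x \in <<[:: a]>>%VS -> exists k, x = k *: a.
Proof. by rewrite span_seq1 => /vlineP. Qed.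

Lemma mem_span2 (K : fieldType) (V : vectType K) (a b x : V) :
  x \in <<[:: a; b]>>%VS -> exists k1 k2, x = k1 *: a + k2 *: b.
Proof.
rewrite span_cons span_seq1 => /memv_addP [y /vlineP [k1 ->] [z /vlineP [k2 ->] ->]].
by exists k1, k2.
Qed.

Lemma free_lc (K : fieldType) (V : vectType K) (v0 v1 v2 x y z : V)
  A0 A1 A2 B0 B1 B2 C0 C1 C2 :
  free [:: v0; v1; v2] ->
  x = lc v0 v1 v2 A0 A1 A2 -> y = lc v0 v1 v2 B0 B1 B2 -> z = lc v0 v1 v2 C0 C1 C2 ->
  det3 A0 A1 A2 B0 B1 B2 C0 C1 C2 != 0 -> free [:: x; y; z].
Proof. by move=> hf -> -> ->; apply: (free_det hf). Qed.

Lemma lc_e0 (K : fieldType) (V : vectType K) (v0 v1 v2 : V) : v0 = lc v0 v1 v2 1 0 0.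
Proof. by rewrite /lc !scale0r scale1r !addr0. Qed.
Lemma lc_e1 (K : fieldType) (V : vectType K) (v0 v1 v2 : V) : v1 = lc v0 v1 v2 0 1 0.
Proof. by rewrite /lc !scale0r scale1r add0r addr0. Qed.
Lemma lc_e2 (K : fieldType) (V : vectType K) (v0 v1 v2 : V) : v2 = lc v0 v1 v2 0 0 1.
Proof. by rewrite /lc !scale0r scale1r !add0r. Qed.

Definition tab1 (K : fieldType) (a b c d al be ga : K) (i j k : nat) : K :=
  match i, j, k with
  | 0%N, 1%N, 1%N => a | 0%N, 1%N, 2%N => b | 0%N, 2%N, 1%N => c | 0%N, 2%N, 2%N => d
  | 1%N, 0%N, 1%N => - a | 1%N, 0%N, 2%N => - b | 2%N, 0%N, 1%N => - c | 2%N, 0%N, 2%N => - d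
  | 1%N, 1%N, 0%N => al | 1%N, 2%N, 0%N => be | 2%N, 1%N, 0%N => be | 2%N, 2%N, 0%N => ga
  | _, _, _ => 0
  end.

Lemma eqsub (K : fieldType) (P Q X : K) : P = Q -> X = Q - P -> X = 0.
Proof. by move=> -> ->; rewrite subrr. Qed.

Lemma eqsub' (K : fieldType) (P X : K) : P = 0 -> X = P -> X = 0.
Proof. by move=> H ->. Qed.

Lemma lin (K : fieldType) (E P Q k : K) : E = 0 -> P - Q = k * E -> P = Q.
Proof. by move=> -> /eqP; rewrite mulr0 subr_eq0 => /eqP. Qed.

Lemma mul2_eq0 (K : fieldType) (x : K) : (2%:R : K) != 0 -> 2%:R * x = 0 -> x = 0.
Proof. by move=> h /eqP; rewrite mulf_eq0 (negPf h) => /eqP. Qed.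

Section Main.
Variables (K : fieldType) (V : vectType K) (L0 L1 : {vspace V}) (br : V -> V -> V).
Hypothesis hsum : (L0 + L1)%VS = fullv.
Hypothesis hdir : directv (L0 + L1).
Hypothesis hl : forall (a : K) (x y z : V), br (a *: x + y) z = a *: br x z + br y z.
Hypothesis hr : forall (a : K) (x y z : V), br x (a *: y + z) = a *: br x y + br x z.
Hypothesis hgr : forall (a b : bool) (x y : V), homog L0 L1 a x -> homog L0 L1 b y ->
          homog L0 L1 (a (+) b) (br x y).
Hypothesis has : forall (a b : bool) (x y : V), homog L0 L1 a x -> homog L0 L1 b y ->
          br x y = - ((-1) ^+ (a && b) *: br y x).
Hypothesis hjac : forall (a b c : bool) (x y z : V), homog L0 L1 a x -> homog L0 L1 b y ->
          homog L0 L1 c z ->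
          br x (br y z) = br (br x y) z + (-1) ^+ (a && b) *: br y (br x z).
Hypothesis hax : forall x : V, x \in L1 -> br x (br x x) = 0.
Hypothesis hd : \dim (fullv : {vspace V}) = 3%N.
Hypothesis hnil : nilpotent br.
Hypothesis h2 : (2%:R : K) != 0.

Lemma anti_ee x y : x \in L0 -> y \in L0 -> br x y = - br y x.
Proof. by move=> hx hy; rewrite (has (a := false) (b := false)) // expr0 scale1r. Qed.
Lemma anti_eo x y : x \in L0 -> y \in L1 -> br x y = - br y x.
Proof. by move=> hx hy; rewrite (has (a := false) (b := true)) // expr0 scale1r. Qed.
Lemma anti_oe x y : x \in L1 -> y \in L0 -> br x y = - br y x.
Proof. by move=> hx hy; rewrite (has (a := true) (b := false)) // expr0 scale1r. Qed.
Lemma sym_oo x y : x \in L1 -> y \in L1 -> br x y = br y x.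
Proof. by move=> hx hy; rewrite (has (a := true) (b := true)) // expr1 scaleN1r opprK. Qed.
Lemma self_e x : x \in L0 -> br x x = 0.
Proof.
move=> hx; have := anti_ee hx hx; move/eqP; rewrite -subr_eq0 opprK.
rewrite -mulr2n -scaler_nat scaler_eq0 (negPf h2) /= => /eqP //.
Qed.
Lemma gr_ee x y : x \in L0 -> y \in L0 -> br x y \in L0.
Proof. by move=> hx hy; apply: (hgr (a := false) (b := false)). Qed.
Lemma gr_eo x y : x \in L0 -> y \in L1 -> br x y \in L1.
Proof. by move=> hx hy; apply: (hgr (a := false) (b := true)). Qed.
Lemma gr_oe x y : x \in L1 -> y \in L0 -> br x y \in L1.
Proof. by move=> hx hy; apply: (hgr (a := true) (b := false)). Qed.
Lemma gr_oo x y : x \in L1 -> y \in L1 -> br x y \in L0.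
Proof. by move=> hx hy; apply: (hgr (a := true) (b := true)). Qed.

Lemma br_lc9 (v0 v1 v2 : V) a0 a1 a2 b0 b1 b2 :
  br (lc v0 v1 v2 a0 a1 a2) (lc v0 v1 v2 b0 b1 b2) =
  (a0 * b0) *: br v0 v0 + (a0 * b1) *: br v0 v1 + (a0 * b2) *: br v0 v2 +
  (a1 * b0) *: br v1 v0 + (a1 * b1) *: br v1 v1 + (a1 * b2) *: br v1 v2 +
  (a2 * b0) *: br v2 v0 + (a2 * b1) *: br v2 v1 + (a2 * b2) *: br v2 v2.
Proof.
rewrite /lc !(brDl hl) !(brDr hr) !(brZl hl) !(brZr hr) !scalerA.
by rewrite !addrA.
Qed.

Lemma case0 (v0 v1 v2 : V) : free [:: v0; v1; v2] -> L0 = 0%VS ->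
  iso_model L0 L1 br 0 [::].
Proof.
move=> hf HL0.
have HL1 : L1 = fullv by rewrite -hsum HL0 add0v.
have Z : forall x y, br x y = 0.
  move=> x y; have : br x y \in L0 by apply: gr_oo; rewrite HL1 memvf.
  by rewrite HL0 memv0 => /eqP.
by apply: (iso_ab hl hr hdir hd hf); rewrite ?HL1 ?memvf ?Z.
Qed.


Lemma case3 (v0 v1 v2 : V) : free [:: v0; v1; v2] -> L1 = 0%VS ->
  iso_model L0 L1 br 3 [::] \/ iso_model L0 L1 br 3 [:: (0, 1, e K 2); (1, 0, - e K 2)]%N.
Proof.
move=> hf HL1; have HL0 : L0 = fullv by rewrite -hsum HL1 addv0.
have E : forall x, x \in L0 by move=> x; rewrite HL0 memvf.
case: (classic (exists x y, br x y != 0)) => [Hne | Hab]; last first.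
  left; have Z : forall x y, br x y = 0.
    move=> x y; case: (eqVneq (br x y) 0) => // H; exfalso; apply: Hab.
    by exists x, y.
  by apply: (iso_ab hl hr hdir hd hf); rewrite /= ?E ?Z.
right.
have [c [c0 c1 cz]] := central_elt hl hr hnil (ltac:(by rewrite hd)) Hne.
have zc : forall v, br v c = 0 by move=> v; rewrite anti_ee ?E // cz oppr0.
set C := (<[c]>^C)%VS.
have bC : basis_of fullv ([:: c] ++ vbasis C).
  rewrite -(addv_complf <[c]>); apply: cat_basis.
  - by apply/directv_addP; exact: capv_compl.
  - exact: seq1_basis.
  - exact: vbasisP.
have szC : size (vbasis C) = 2%N by rewrite size_tuple dimv_compl hd dim_vline c0.
move: bC szC; case: (tval (vbasis C)) => [|u [|w [|? ?]]] //= bC _.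
have hf' := basis_free bC.
have Hin : forall x y, br x y \in <[br u w]>%VS.
  move=> x y; have [k0 [k1 [k2 ->]]] := lc_span hf' hd x.
  have [l0 [l1 [l2 ->]]] := lc_span hf' hd y.
  rewrite br_lc9 !cz !zc (self_e (E u)) (self_e (E w)) (anti_ee (E w) (E u)).
  by rewrite !scaler0 !add0r !addr0 memvD // memvZ // ?memvN memv_line.
have : c \in <[br u w]>%VS by apply: (subvP (lcs1_sub Hin)).
case/vlineP => lam Hlam.
have lam0 : lam != 0 by apply: contraNneq c0 => H; rewrite Hlam H scale0r.
set h := br u w in Hlam Hin *.
have hE : h = lam^-1 *: c by rewrite Hlam scalerA mulVf // scale1r.
have ch : forall v, br h v = 0 by move=> v; rewrite hE (brZl hl) cz scaler0.
have hc : forall v, br v h = 0 by move=> v; rewrite hE (brZr hr) zc scaler0.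
apply: (iso_H (m := 3) (w0 := u) (w1 := w) (w2 := h) hl hr hdir hd) => //=;
  rewrite ?E ?self_e ?ch ?hc //.
- apply: (free_lc (v0 := c) (v1 := u) (v2 := w) (A0 := 0) (A1 := 1) (A2 := 0)
     (B0 := 0) (B1 := 0) (B2 := 1) (C0 := lam^-1) (C1 := 0) (C2 := 0)) hf' _ _ _ _.
  + exact: lc_e1.
  + exact: lc_e2.
  + by rewrite hE /lc !scale0r !addr0.
  + have -> : det3 0 1 0 0 0 1 lam^-1 0 0 = lam^-1 by rewrite /det3; ring.
    by rewrite invr_neq0.
- by rewrite anti_ee ?E.
Qed.


Lemma nil_eig x y mu : y != 0 -> br y x = mu *: y -> mu = 0.
Proof.
move=> y0 H; case: (eqVneq mu 0) => // mu0; exfalso.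
have : br y (mu^-1 *: x) = y by rewrite (brZr hr) H scalerA mulVf // scale1r.
by move/(nilA hl hr hnil)/eqP; rewrite (negPf y0).
Qed.

Lemma case2 (v0 v1 v2 : V) : free [:: v0; v1; v2] ->
  L0 = <<[:: v0; v1]>>%VS -> L1 = <<[:: v2]>>%VS ->
  iso_model L0 L1 br 2 [::] \/ iso_model L0 L1 br 2 [:: (2, 2, e K 1)]%N.
Proof.
move=> hf HL0 HL1.
have e0 : v0 \in L0 by rewrite HL0 memv_span // inE eqxx.
have e1 : v1 \in L0 by rewrite HL0 memv_span // !inE eqxx orbT.
have o2 : v2 \in L1 by rewrite HL1 memv_span // inE eqxx.
have n2 : v2 != 0 by apply: (free_not0 hf); rewrite !inE eqxx !orbT.
have k02 : br v0 v2 = 0.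
  have := gr_eo e0 o2; rewrite {1}HL1 => /mem_span1 [lam Hl].
  have := nil_eig (x := v0) (mu := - lam) n2.
  by rewrite (anti_oe o2 e0) Hl scaleNr => /(_ erefl) /eqP; rewrite oppr_eq0 => /eqP ->;
     rewrite scale0r.
have k12 : br v1 v2 = 0.
  have := gr_eo e1 o2; rewrite {1}HL1 => /mem_span1 [lam Hl].
  have := nil_eig (x := v1) (mu := - lam) n2.
  by rewrite (anti_oe o2 e1) Hl scaleNr => /(_ erefl) /eqP; rewrite oppr_eq0 => /eqP ->;
     rewrite scale0r.
have k20 : br v2 v0 = 0 by rewrite (anti_oe o2 e0) k02 oppr0.
have k21 : br v2 v1 = 0 by rewrite (anti_oe o2 e1) k12 oppr0.
have k00 := self_e e0; have k11 := self_e e1.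
have k01 : br v0 v1 = 0.
  have := gr_ee e0 e1; rewrite {1}HL0 => /mem_span2 [al [be Hy]].
  case: (eqVneq (br v0 v1) 0) => // y0; exfalso.
  have hy0 : br (br v0 v1) v0 = (- be) *: br v0 v1.
    rewrite {1}Hy (brDl hl) !(brZl hl) k00 (anti_ee e1 e0) scaler0 add0r.
    by rewrite scalerN scaleNr.
  have hy1 : br (br v0 v1) v1 = al *: br v0 v1.
    by rewrite {1}Hy (brDl hl) !(brZl hl) k11 scaler0 addr0.
  have := nil_eig y0 hy0; move/eqP; rewrite oppr_eq0 => /eqP be0.
  have := nil_eig y0 hy1 => al0.
  by move: y0; rewrite Hy al0 be0 !scale0r addr0 eqxx.
have k10 : br v1 v0 = 0 by rewrite (anti_ee e1 e0) k01 oppr0.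
have := gr_oo o2 o2; rewrite {1}HL0 => /mem_span2 [g0 [g1 Ht]].
have Zl : forall x y, x \in L0 -> br x y = 0.
  move=> x y; rewrite HL0 => /mem_span2 [a0 [a1 ->]].
  have [b0 [b1 [b2 ->]]] := lc_span hf hd y.
  rewrite (_ : a0 *: v0 + a1 *: v1 = lc v0 v1 v2 a0 a1 0);
    last by rewrite /lc scale0r addr0.
  rewrite br_lc9 k00 k01 k02 k10 k11 k12 k20 k21 !scaler0 !mul0r scale0r.
  by rewrite !addr0.
have Zr : forall x y, x \in L0 -> br y x = 0.
  move=> x y hx; have [b0 [b1 [b2 Ey]]] := lc_span hf hd y.
  case: (eqVneq b2 0) => [b20|b2n].
    rewrite Zl // Ey b20 /lc scale0r addr0 memvD // memvZ //.
  have hy : y \in L1 -> br y x = 0 by move=> hy; rewrite (anti_oe hy hx) Zl ?oppr0.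
  have hy' : y - b2 *: v2 \in L0 by rewrite Ey /lc addrK memvD // memvZ.
  have -> : y = (y - b2 *: v2) + b2 *: v2 by rewrite subrK.
  rewrite (brDl hl) Zl // add0r (brZl hl).
  by rewrite (anti_oe o2 hx) Zl ?oppr0 ?scaler0.
case: (eqVneq (br v2 v2) 0) => [t0|tn].
  left; apply: (iso_ab hl hr hdir hd hf) => //=.
right.
have tE : br v2 v2 = lc v0 v1 v2 g0 g1 0 by rewrite Ht /lc scale0r addr0.
have tL0 : br v2 v2 \in L0 by apply: gr_oo.
case: (eqVneq g0 0) => [g00|g0n].
  have g1n : g1 != 0.
    by apply: contraNneq tn => g10; rewrite Ht g00 g10 !scale0r addr0.
  apply: (iso_L21 (m := 2) (w0 := v0) (w1 := br v2 v2) (w2 := v2) hl hr hdir hd)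
    => //=; try (by rewrite Zl); try (by rewrite Zr).
  apply: (free_lc (A0 := 1) (A1 := 0) (A2 := 0) (B0 := g0) (B1 := g1) (B2 := 0)
     (C0 := 0) (C1 := 0) (C2 := 1) hf (lc_e0 _ _ _) tE (lc_e2 _ _ _)).
  have -> : det3 1 0 0 g0 g1 0 0 0 1 = g1 by rewrite /det3; ring.
  done.
apply: (iso_L21 (m := 2) (w0 := v1) (w1 := br v2 v2) (w2 := v2) hl hr hdir hd)
  => //=; try (by rewrite Zl); try (by rewrite Zr).
apply: (free_lc (A0 := 0) (A1 := 1) (A2 := 0) (B0 := g0) (B1 := g1) (B2 := 0)
   (C0 := 0) (C1 := 0) (C2 := 1) hf (lc_e1 _ _ _) tE (lc_e2 _ _ _)).
have -> : det3 0 1 0 g0 g1 0 0 0 1 = - g0 by rewrite /det3; ring.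
by rewrite oppr_eq0.
Qed.


Lemma case1 (hcl : GRing.closed_field_axiom K) (v0 v1 v2 : V) : free [:: v0; v1; v2] ->
  L0 = <<[:: v0]>>%VS -> L1 = <<[:: v1; v2]>>%VS ->
  [\/ iso_model L0 L1 br 1 [::],
       iso_model L0 L1 br 1 [:: (1, 2, e K 0); (2, 1, e K 0)]%N,
       iso_model L0 L1 br 1 [:: (0, 1, e K 2); (1, 0, - e K 2)]%N |
       iso_model L0 L1 br 1 [:: (2, 2, e K 0)]%N].
Proof.
move=> hf HL0 HL1.
have lcL0 : forall k, lc v0 v1 v2 k 0 0 \in L0.
  by move=> k; rewrite HL0 /lc !scale0r !addr0 memvZ // memv_span // inE eqxx.
have lcL1 : forall k1 k2, lc v0 v1 v2 0 k1 k2 \in L1.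
  move=> k1 k2; rewrite HL1 /lc scale0r add0r memvD // memvZ // memv_span //
    !inE eqxx ?orbT //.
have e0 : v0 \in L0 by rewrite (lc_e0 v0 v1 v2).
have o1 : v1 \in L1 by rewrite (lc_e1 v0 v1 v2).
have o2 : v2 \in L1 by rewrite (lc_e2 v0 v1 v2).
have ofL1 : forall x, x \in L1 -> exists k1 k2, x = lc v0 v1 v2 0 k1 k2.
  move=> x; rewrite HL1 => /mem_span2 [k1 [k2 ->]]; exists k1, k2.
  by rewrite /lc scale0r add0r.
have ofL0 : forall x, x \in L0 -> exists k, x = lc v0 v1 v2 k 0 0.
  move=> x; rewrite HL0 => /mem_span1 [k ->]; exists k.
  by rewrite /lc !scale0r !addr0.
have [a [b H01]] := ofL1 _ (gr_eo e0 o1).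
have [c [d H02]] := ofL1 _ (gr_eo e0 o2).
have [al H11] := ofL0 _ (gr_oo o1 o1).
have [be H12] := ofL0 _ (gr_oo o1 o2).
have [ga H22] := ofL0 _ (gr_oo o2 o2).
have H00 : br v0 v0 = lc v0 v1 v2 0 0 0 by rewrite lc0 self_e.
have H10 : br v1 v0 = lc v0 v1 v2 0 (-a) (-b)
  by rewrite (anti_oe o1 e0) H01 lcN oppr0.
have H20 : br v2 v0 = lc v0 v1 v2 0 (-c) (-d)
  by rewrite (anti_oe o2 e0) H02 lcN oppr0.
have H21 : br v2 v1 = lc v0 v1 v2 be 0 0 by rewrite (sym_oo o2 o1).
set s := tab1 a b c d al be ga.
have Hs : tabok br v0 v1 v2 s.
  by move=> [|[|[|i]]] [|[|[|j]]] //= _ _.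
have J11 : a * al + b * be = 0.
  apply: (mul2_eq0 h2).
  have := hjac (a := false) (b := true) (c := true) (lcL0 1) (lcL1 1 0) (lcL1 1 0).
  rewrite expr0 scale1r !(br_lc hl hr Hs) lcD => /(lc_inj hf) [J _ _].
  by apply: (eqsub J); rewrite /bil /=; ring.
have J12 : a * be + b * ga + c * al + d * be = 0.
  have := hjac (a := false) (b := true) (c := true) (lcL0 1) (lcL1 1 0) (lcL1 0 1).
  rewrite expr0 scale1r !(br_lc hl hr Hs) lcD => /(lc_inj hf) [J _ _].
  by apply: (eqsub J); rewrite /bil /=; ring.
have J22 : c * be + d * ga = 0.
  apply: (mul2_eq0 h2).
  have := hjac (a := false) (b := true) (c := true) (lcL0 1) (lcL1 0 1) (lcL1 0 1).
  rewrite expr0 scale1r !(br_lc hl hr Hs) lcD => /(lc_inj hf) [J _ _].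
  by apply: (eqsub J); rewrite /bil /=; ring.
have [X1a X1b] : al * a = 0 /\ al * b = 0.
  have := hax (lcL1 1 0); rewrite !(br_lc hl hr Hs) -(lc0 v0 v1 v2) => /(lc_inj hf) [_ Ja Jb].
  by split; [apply: (eqsub Ja) | apply: (eqsub Jb)]; rewrite /bil /=; ring.
have [X2c X2d] : ga * c = 0 /\ ga * d = 0.
  have := hax (lcL1 0 1); rewrite !(br_lc hl hr Hs) -(lc0 v0 v1 v2) => /(lc_inj hf) [_ Ja Jb].
  by split; [apply: (eqsub Ja) | apply: (eqsub Jb)]; rewrite /bil /=; ring.
(* nilpotency of ad v0 *)
have eig : forall lam x1 x2, lam != 0 -> (a - lam) * x1 + c * x2 = 0 ->
    b * x1 + (d - lam) * x2 = 0 -> x1 = 0 /\ x2 = 0.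
  move=> lam x1 x2 l0 E1 E2.
  have H : br (lc v0 v1 v2 0 x1 x2) (lc v0 v1 v2 1 0 0) = (- lam) *: lc v0 v1 v2 0 x1 x2.
    rewrite (br_lc hl hr Hs) lcZ; apply: lc_eq; rewrite /bil /=.
    - ring.
    - by apply: (lin (k := -1) E1); ring.
    - by apply: (lin (k := -1) E2); ring.
  case: (eqVneq (lc v0 v1 v2 0 x1 x2) 0) => [/(lc_zero hf) [_ -> ->] // | nz].
  have := nil_eig nz H; move/eqP; rewrite oppr_eq0 (negPf l0) //.
have root0 : forall lam, lam ^+ 2 - (a + d) * lam + (a * d - b * c) = 0 -> lam = 0.
  move=> lam Hl; case: (eqVneq lam 0) => // l0; exfalso.
  have [c0 al0] : c = 0 /\ - (a - lam) = 0.
    apply: (eig lam) => //; first by ring.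
    by apply: (lin (k := -1) Hl); ring.
  have [dl b0] : d - lam = 0 /\ - b = 0.
    apply: (eig lam) => //; last by ring.
    by apply: (lin (k := 1) Hl); ring.
  have [] := eig lam 1 0 l0.
  - have -> : a = lam by apply/eqP; rewrite -subr_eq0 -oppr_eq0 al0.
    by rewrite subrr; ring.
  - have -> : b = 0 by apply/eqP; rewrite -oppr_eq0 b0.
    by rewrite dl; ring.
  - by move/eqP; rewrite oner_eq0.
have [det0 tr0] : a * d - b * c = 0 /\ a + d = 0.
  have [x Hx] := hcl 2 (fun i => if i == 0%N then - (a * d - b * c) else a + d) (erefl _).
  rewrite !big_ord_recl big_ord0 /= addr0 expr0 expr1 mulr1 in Hx.
  have x0 : x = 0 by apply: root0; rewrite Hx; ring.
  have dt : a * d - b * c = 0.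
    by move: Hx; rewrite x0 expr0n /= mulr0 addr0 => /eqP; rewrite eq_sym oppr_eq0 => /eqP.
  split=> //; apply: root0; rewrite dt; ring.
have dE : d = - a by apply/eqP; rewrite -(subr_eq0 d) opprK addrC tr0.
subst d; subst s.
case: (eqVneq b 0) => [b0 | bn].
-
  subst b.
  have a0 : a = 0.
    by apply/eqP; rewrite -sqrf_eq0 -oppr_eq0; apply/eqP; rewrite -det0; ring.
  subst a.
  case: (eqVneq c 0) => [c0 | cn].
  + subst c. clear J11 J12 J22 X1a X1b X2c X2d eig root0 det0 tr0.
    (* N = 0: classify the symmetric form *)
    case: (eqVneq (al * ga - be ^+ 2) 0) => [dl0 | dln].
    * case: (eqVneq al 0) => [al0 | aln].
      - subst al.
        have be0 : be = 0.
          by apply/eqP; rewrite -sqrf_eq0 -oppr_eq0; apply/eqP; rewrite -dl0; ring.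
        subst be.
        case: (eqVneq ga 0) => [ga0 | gan].
        ++ subst ga; apply: Or41.
          apply: (iso_ab (m := 1) (w0 := lc v0 v1 v2 1 0 0) (w1 := lc v0 v1 v2 0 1 0)
             (w2 := lc v0 v1 v2 0 0 1) hl hr hdir hd) => //=;
            rewrite ?(br_lc hl hr Hs) ?lcN -?(lc0 v0 v1 v2); try (apply: lc_eq; rewrite /bil /=; ring).
          apply: (free_det hf).
          have -> : det3 (1 : K) 0 0 0 1 0 0 0 1 = 1 by rewrite /det3; ring.
          by rewrite ?oner_eq0.
        ++ apply: Or44.
          apply: (iso_L4 (m := 1) (w0 := lc v0 v1 v2 ga 0 0) (w1 := lc v0 v1 v2 0 1 0)
             (w2 := lc v0 v1 v2 0 0 1) hl hr hdir hd) => //=;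
            rewrite ?(br_lc hl hr Hs) ?lcN -?(lc0 v0 v1 v2); try (apply: lc_eq; rewrite /bil /=; ring).
          apply: (free_det hf).
          have -> : det3 ga 0 0 0 1 0 0 0 1 = ga by rewrite /det3; ring.
          by rewrite ?oner_eq0.
      - have gE : ga = be ^+ 2 / al.
          by apply: (lin (k := al^-1) dl0); field.
        subst ga; apply: Or44.
        apply: (iso_L4 (m := 1) (w0 := lc v0 v1 v2 al 0 0) (w1 := lc v0 v1 v2 0 be (- al))
           (w2 := lc v0 v1 v2 0 1 0) hl hr hdir hd) => //=;
          rewrite ?(br_lc hl hr Hs) ?lcN -?(lc0 v0 v1 v2); try (apply: lc_eq; rewrite /bil /=; field; by repeat (apply/andP; split)).
        apply: (free_det hf).
        have -> : det3 al 0 0 0 be (- al) 0 1 0 = al ^+ 2 by rewrite /det3; ring.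
        by rewrite sqrf_eq0.
    * case: (eqVneq al 0) => [al0 | aln].
      - subst al.
        have ben : be != 0 by apply: contraNneq dln => ->; apply/eqP; ring.
        apply: Or42.
        apply: (iso_L2 (m := 1) (w0 := lc v0 v1 v2 be 0 0) (w1 := lc v0 v1 v2 0 1 0)
           (w2 := lc v0 v1 v2 0 (- ga / (2%:R * be)) 1) hl hr hdir hd) => //=;
          rewrite ?(br_lc hl hr Hs) ?lcN -?(lc0 v0 v1 v2); try (apply: lc_eq; rewrite /bil /=; field; by repeat (apply/andP; split)).
        apply: (free_det hf).
        have -> : det3 be 0 0 0 1 0 0 (- ga / (2%:R * be)) 1 = be by rewrite /det3; ring.
          by rewrite ?oner_eq0.
      - have [x Hx] := hcl 2 (fun i => if i == 0%N then - ga / al else - (2%:R * be) / al) (erefl _).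
        rewrite !big_ord_recl big_ord0 /= addr0 expr0 expr1 mulr1 in Hx.
        move/eqP: Hx; rewrite -subr_eq0 => /eqP Hx.
        have gE : ga = - (al * x ^+ 2 + 2%:R * be * x).
          by apply: (lin (k := al) Hx); field.
        subst ga.
        have mun : x * al + be != 0.
          apply: contraNneq dln => mu0.
          have -> : be = - (x * al) by apply/eqP; rewrite -subr_eq0 opprK addrC mu0.
          apply/eqP; ring.
        apply: Or42.
        apply: (iso_L2 (m := 1) (w0 := lc v0 v1 v2 (x * al + be) 0 0)
           (w1 := lc v0 v1 v2 0 x 1)
           (w2 := lc v0 v1 v2 0 (1 + (- al / (2%:R * (x * al + be))) * x)
                     (- al / (2%:R * (x * al + be)))) hl hr hdir hd) => //=;
          rewrite ?(br_lc hl hr Hs) ?lcN -?(lc0 v0 v1 v2); try (apply: lc_eq; rewrite /bil /=; field; by repeat (apply/andP; split)).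
        apply: (free_det hf).
        have -> : det3 (x * al + be) 0 0 0 x 1 0 (1 + (- al / (2%:R * (x * al + be))) * x)
                     (- al / (2%:R * (x * al + be))) = - (x * al + be) by rewrite /det3; ring.
        by rewrite oppr_eq0.
  + have ga0 : ga = 0 by apply: (mulIf cn); rewrite mul0r X2c.
    subst ga.
    have be0 : be = 0.
      by apply: (mulIf cn); rewrite mul0r; apply: (eqsub' J22); ring.
    subst be.
    have al0 : al = 0.
      by apply: (mulIf cn); rewrite mul0r; apply: (eqsub' J12); ring.
    subst al.
    apply: Or43.
    apply: (iso_H (m := 1) (w0 := lc v0 v1 v2 1 0 0) (w1 := lc v0 v1 v2 0 0 1)
       (w2 := lc v0 v1 v2 0 c 0) hl hr hdir hd) => //=;
      rewrite ?(br_lc hl hr Hs) ?lcN -?(lc0 v0 v1 v2); try (apply: lc_eq; rewrite /bil /=; ring).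
    apply: (free_det hf).
    have -> : det3 1 0 0 0 0 1 0 c 0 = - c by rewrite /det3; ring.
    by rewrite oppr_eq0.
-
  have al0 : al = 0 by apply: (mulIf bn); rewrite mul0r X1b.
  subst al.
  have be0 : be = 0.
    by apply: (mulIf bn); rewrite mul0r; apply: (eqsub' J11); ring.
  subst be.
  have ga0 : ga = 0.
    by apply: (mulIf bn); rewrite mul0r; apply: (eqsub' J12); ring.
  subst ga.
  have cE : c = - a ^+ 2 / b.
    by apply/eqP; rewrite eq_sym -subr_eq0; apply/eqP; apply: (lin (k := b^-1) det0); field.
  subst c.
  apply: Or43.
  apply: (iso_H (m := 1) (w0 := lc v0 v1 v2 1 0 0) (w1 := lc v0 v1 v2 0 1 0)
     (w2 := lc v0 v1 v2 0 a b) hl hr hdir hd) => //=;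
    rewrite ?(br_lc hl hr Hs) ?lcN -?(lc0 v0 v1 v2); try (apply: lc_eq; rewrite /bil /=; field; by repeat (apply/andP; split)).
  apply: (free_det hf).
  have -> : det3 1 0 0 0 1 0 0 a b = b by rewrite /det3; ring.
          by rewrite ?oner_eq0.
Qed.

End Main.

Unset Implicit Arguments.

Theorem mainTheorem5 (K : closedFieldType) (p : nat)
  (hp : prime p) (hchar : p \in [pchar K]) (hp3 : (3 <= p)%N)
  (V : vectType K) (L0 L1 : {vspace V}) (br : V -> V -> V)
  (hL : is_lie_superalgebra L0 L1 br)
  (hdim : \dim (fullv : {vspace V}) = 3%N)
  (hnil : nilpotent br) :
  (* sdim (0|3) *)
  iso_model L0 L1 br 0 [::]
  (* sdim (1|2), basis e1 | e2, e3 *)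
  \/ iso_model L0 L1 br 1 [::]
  \/ iso_model L0 L1 br 1 [:: (1, 2, e K 0); (2, 1, e K 0)]%N
  \/ iso_model L0 L1 br 1 [:: (0, 1, e K 2); (1, 0, - e K 2)]%N
  \/ iso_model L0 L1 br 1 [:: (2, 2, e K 0)]%N
  (* sdim (2|1), basis e1, e2 | e3 *)
  \/ iso_model L0 L1 br 2 [::]
  \/ iso_model L0 L1 br 2 [:: (2, 2, e K 1)]%N
  (* sdim (3|0), basis e1, e2, e3 *)
  \/ iso_model L0 L1 br 3 [::]
  \/ iso_model L0 L1 br 3 [:: (0, 1, e K 2); (1, 0, - e K 2)]%N.
Proof.
case: hL => [[hsum hdir] [hl [hr [hgr [has [hjac hax]]]]]].
have h2 : (2%:R : K) != 0.
  rewrite -(dvdn_pcharf hchar); apply/negP => /(dvdn_leq (isT : (0 < 2)%N)) hp2.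
  by have := leq_trans hp3 hp2.
have hcl : GRing.closed_field_axiom K := @solve_monicpoly K.
have [v0 [v1 [v2 [hf []]]]] := graded_setup hsum hdir hdim.
- move=> [HL0 _]; left; exact: (case0 hsum hdir hl hr hgr hdim hf HL0).
- move=> [HL0 HL1].
  have := case1 hdir hl hr hgr has hjac hax hdim hnil h2 hcl hf HL0 HL1.
  by case=> H; [do 1 right; left | do 2 right; left | do 3 right; left | do 4 right; left].
- move=> [HL0 HL1].
  have := case2 hdir hl hr hgr has hdim hnil h2 hf HL0 HL1.
  by case=> H; [do 5 right; left | do 6 right; left].
- move=> [_ HL1].
  have := case3 hsum hdir hl hr has hdim hnil h2 hf HL1.
  by case=> H; [do 7 right; left | do 8 right].
Qed.
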